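(* For $p\in(0,1)$ and $y\in(0,1)$ let $$I(y)=\log(y)\log\!\left(\frac{\log p}{\log y}\right)+\log\!\left(\frac yp\right),\qquad \mathcal{I}(y)=y\log\!\left(\frac yp\right)+(1-y)\log\!\left(\frac{1-y}{1-p}\right).$$ Then for all $p,y\in(0,1)$, $I(y)\ge\mathcal{I}(y)$, with equality if and only if $y=p$.
   Context: $\mathcal{I}$ is the Cramér rate function of the empirical mean of i.i.d. Bernoulli($p$) variables; $I$ is the rate function of the Adaptive Multilevel Splitting estimator. *)

(* Defs.v *)
From Stdlib Require Import Reals.
Open Scope R_scope.

Definition I_ams (p y : R) : R :=
  ln y * ln (ln p / ln y) + ln (y / p).

Definition I_cramer (p y : R) : R :=
  y * ln (y / p) + (1 - y) * ln ((1 - y) / (1 - p)).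

(* Main.v *)
Require Import Defs.
From Stdlib Require Import Reals Lra.
From Coquelicot Require Import Coquelicot.
Open Scope R_scope.
Lemma lnlt (x : R) : 0 < x < 1 -> 1 - ln x < / x.
Proof.
  intros [H0 H1].
  assert (Hn : ln (/ x) <> 0).
  { rewrite ln_Rinv by lra. assert (ln x < 0). { rewrite <- ln_1. apply ln_increasing; lra. } lra. }
  pose proof (exp_ineq1 _ Hn) as E. rewrite exp_ln in E by (apply Rinv_0_lt_compat; lra).
  rewrite ln_Rinv in E by lra. lra.
Qed.

Lemma h_incr (s t : R) : 0 < s -> s < t -> t < 1 -> ln s / (1 - s) < ln t / (1 - t).
Proof.
  intros Hs Hst Ht.
  destruct (MVT_cor2 (fun x => ln x / (1 - x))
     (fun x => (/ x * (1 - x) + ln x) / ((1 - x) * (1 - x))) s t Hst) as [c [Hc1 Hc2]].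
  { intros c Hc. apply is_derive_Reals. auto_derive.
    - split; [lra|]. split; [lra|]. exact I.
    - field. lra. }
  cut (0 < (/ c * (1 - c) + ln c) / ((1 - c) * (1 - c))).
  { intro Hp. assert (0 < (/ c * (1 - c) + ln c) / ((1 - c) * (1 - c)) * (t - s)).
    { apply Rmult_lt_0_compat; lra. } lra. }
  apply Rdiv_lt_0_compat.
  - pose proof (lnlt c ltac:(lra)). assert (/ c * (1 - c) = / c - 1) by (field; lra). lra.
  - apply Rmult_lt_0_compat; lra.
Qed.
Require Import Defs.
Lemma cross (a b c d : R) : 0 < b -> 0 < d -> a / b < c / d -> a * d < c * b.
Proof.
  intros Hb Hd H.
  assert (E1 : a * d = (a / b) * (b * d)) by (field; lra).
  assert (E2 : c * b = (c / d) * (b * d)) by (field; lra).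
  rewrite E1, E2. apply Rmult_lt_compat_r; [nra|exact H].
Qed.

Definition F (y q : R) := I_ams q y - I_cramer q y.
Definition F' (y q : R) := ln y / (q * ln q) - (1 - y) / (q * (1 - q)).

Lemma lnneg x : 0 < x < 1 -> ln x < 0.
Proof. intros. rewrite <- ln_1. apply ln_increasing; lra. Qed.

Lemma F_der (y q : R) : 0 < y < 1 -> 0 < q < 1 -> derivable_pt_lim (F y) q (F' y q).
Proof.
  intros Hy Hq. pose proof (lnneg _ Hy). pose proof (lnneg _ Hq).
  apply is_derive_Reals. unfold F, F', I_ams, I_cramer. auto_derive.
  - repeat split; try lra.
    + assert (/ ln y < 0) by (apply Rinv_lt_0_compat; lra). nra.
    + apply Rmult_lt_0_compat; [lra|apply Rinv_0_lt_compat; lra].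
    + apply Rmult_lt_0_compat; [lra|apply Rinv_0_lt_compat; lra].
    + apply Rmult_lt_0_compat; [lra|apply Rinv_0_lt_compat; lra].
  - field. repeat split; lra.
Qed.

Lemma F_yy y : 0 < y < 1 -> F y y = 0.
Proof.
  intros Hy. pose proof (lnneg _ Hy). unfold F, I_ams, I_cramer.
  replace (ln y / ln y) with 1 by (field; lra).
  replace (y / y) with 1 by (field; lra).
  replace ((1 - y) / (1 - y)) with 1 by (field; lra).
  rewrite ln_1. ring.
Qed.

Lemma F'_sign y c : 0 < y < 1 -> 0 < c < 1 -> c <> y -> 0 < F' y c * (c - y).
Proof.
  intros Hy Hc Hne. pose proof (lnneg _ Hy) as L. pose proof (lnneg _ Hc) as M.
  unfold F'.
  assert (E : ln y / (c * ln c) - (1 - y) / (c * (1 - c)) =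
     (ln y * (1 - c) - ln c * (1 - y)) / (c * ln c * (1 - c))) by (field; lra).
  rewrite E.
  assert (Hd : c * ln c * (1 - c) < 0).
  { assert (c * (1 - c) > 0) by nra. nra. }
  destruct (Rlt_or_le c y) as [Hlt|Hle].
  - pose proof (cross (ln c) (1 - c) (ln y) (1 - y) ltac:(lra) ltac:(lra) (h_incr c y ltac:(lra) Hlt ltac:(lra))).
    assert (Hq : (ln y * (1 - c) - ln c * (1 - y)) / (c * ln c * (1 - c)) < 0).
    { apply Rdiv_pos_neg; lra. }
    nra.
  - assert (Hlt : y < c) by lra.
    pose proof (cross (ln y) (1 - y) (ln c) (1 - c) ltac:(lra) ltac:(lra) (h_incr y c ltac:(lra) Hlt ltac:(lra))).
    assert (Hq : 0 < (ln y * (1 - c) - ln c * (1 - y)) / (c * ln c * (1 - c))).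
    { replace ((ln y * (1 - c) - ln c * (1 - y)) / (c * ln c * (1 - c))) with
        ((ln c * (1 - y) - ln y * (1 - c)) / - (c * ln c * (1 - c))) by (field; lra).
      apply Rdiv_lt_0_compat; lra. }
    nra.
Qed.

Lemma F_pos y p : 0 < y < 1 -> 0 < p < 1 -> p <> y -> 0 < F y p.
Proof.
  intros Hy Hp Hne. rewrite <- (Rminus_0_r (F y p)). rewrite <- (F_yy y Hy) at 2.
  destruct (Rlt_or_le p y) as [Hlt|Hle].
  - destruct (MVT_cor2 (F y) (F' y) p y Hlt) as [c [E Hc]].
    { intros c Hc. apply F_der; lra. }
    pose proof (F'_sign y c Hy ltac:(lra) ltac:(lra)). nra.
  - assert (Hlt : y < p) by lra.
    destruct (MVT_cor2 (F y) (F' y) y p Hlt) as [c [E Hc]].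
    { intros c Hc. apply F_der; lra. }
    pose proof (F'_sign y c Hy ltac:(lra) ltac:(lra)). nra.
Qed.

Theorem proposition6p1 (p y : R) (hp : 0 < p < 1) (hy : 0 < y < 1) :
  I_cramer p y <= I_ams p y /\ (I_ams p y = I_cramer p y <-> y = p).
Proof.
  destruct (Req_dec p y) as [->|Hne].
  - pose proof (F_yy y hy). unfold F in *. split; [lra|]. split; [intros; reflexivity|lra].
  - pose proof (F_pos y p hy hp Hne). unfold F in *. split; [lra|]. split; intro; [lra|congruence].
Qed.
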